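(* Let $f^i_m:\mathbb{R}^d\to\mathbb{R}$ ($m\in[M]$, $i\in[n]$) be differentiable and $L$-smooth, with $f_m=\frac1n\sum_i f^i_m$, $f=\frac1M\sum_m f_m$, and suppose $f_*=\inf f$, $f_{*,m}=\inf f_m$, $f^i_{*,m}=\inf f^i_m$ are all finite. Fix $x_t\in\mathbb{R}^d$ and $\gamma\le\frac{1}{2Ln}$. For each $m\in[M]$ let $\pi_m$ be a uniformly random permutation of $[n]$ and define $x^0_{t,m}=x_t$, $x^{i+1}_{t,m}=x^i_{t,m}-\gamma\nabla f_m^{\pi_m^i}(x^i_{t,m})$ for $i=0,\dots,n-1$. Then $$\frac{1}{Mn}\sum_{m=1}^M\sum_{i=0}^{n-1}\mathbb{E}\|x_t-x^i_{t,m}\|^2\le 4\gamma^2n^2L\big(f(x_t)-f_*\big)+2\gamma^2n^2L\Delta_*+2\gamma^2nL\frac1M\sum_{m=1}^M\Delta_{*,m},$$ where the expectation is over the permutations.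
   Context: $[k]=\{1,\dots,k\}$. $L$-smooth: $\|\nabla h(x)-\nabla h(y)\|\le L\|x-y\|$ for all $x,y$. $\Delta_*=f_*-\frac1M\sum_{m=1}^M f_{*,m}$ and $\Delta_{*,m}=f_*-\frac1n\sum_{i=1}^n f^i_{*,m}$. Permutations $\pi_m=(\pi_m^0,\dots,\pi_m^{n-1})$ are indexed from $0$. *)

(* Defs.v *)
From HB Require Import structures.
From mathcomp Require Import all_boot all_order all_algebra all_fingroup.
From mathcomp Require Import all_classical all_reals all_analysis.
Set Implicit Arguments. Unset Strict Implicit. Unset Printing Implicit Defensive.
Import Order.TTheory GRing.Theory Num.Theory.
Import numFieldNormedType.Exports.
Local Open Scope classical_set_scope.
Local Open Scope ring_scope.

Section Defs.
Variable R : realType.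

Definition sqnorm d (v : 'rV[R]_d) : R := \sum_(j < d) (v ord0 j) ^+ 2.
Definition enorm d (v : 'rV[R]_d) : R := Num.sqrt (sqnorm v).

Definition grad d (h : 'rV[R]_d -> R) (x : 'rV[R]_d) : 'rV[R]_d :=
  \row_(j < d) ('d h x (delta_mx ord0 j : 'rV[R]_d)).

Definition Lsmooth d (L : R) (h : 'rV[R]_d -> R) : Prop :=
  forall x y, enorm (grad h x - grad h y) <= L * enorm (x - y).

(* infimum of a function (finite when its range is bounded below) *)
Definition finf d (h : 'rV[R]_d -> R) : R := inf (range h).

Definition fm M n d (F : 'I_M -> 'I_n -> 'rV[R]_d -> R) (m : 'I_M) (x : 'rV[R]_d) : R :=
  n%:R^-1 * \sum_(i < n) F m i x.
Definition fall M n d (F : 'I_M -> 'I_n -> 'rV[R]_d -> R) (x : 'rV[R]_d) : R :=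
  M%:R^-1 * \sum_(m < M) fm F m x.

Definition Delta_star M n d (F : 'I_M -> 'I_n -> 'rV[R]_d -> R) : R :=
  finf (fall F) - M%:R^-1 * \sum_(m < M) finf (fm F m).
Definition Delta_star_m M n d (F : 'I_M -> 'I_n -> 'rV[R]_d -> R) (m : 'I_M) : R :=
  finf (fall F) - n%:R^-1 * \sum_(i < n) finf (F m i).

(* local shuffled-GD iterates: x^0 = x0, x^{k+1} = x^k - gamma grad f^{pi(k)} (x^k)
   for k < n (for k >= n the sequence is frozen; only k < n is used) *)
Fixpoint rr_iter n d (gamma : R) (h : 'I_n -> 'rV[R]_d -> R) (pi : 'S_n)
    (x0 : 'rV[R]_d) (k : nat) : 'rV[R]_d :=
  match k with
  | 0 => x0
  | k'.+1 =>
      let x := rr_iter gamma h pi x0 k' in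
      if (insub k' : option 'I_n) is Some i then x - gamma *: grad (h (pi i)) x
      else x
  end.

End Defs.

(* Main.v *)
Require Import Defs.
From HB Require Import structures.
From mathcomp Require Import all_boot all_order all_algebra all_fingroup.
From mathcomp Require Import all_classical all_reals all_analysis.
From mathcomp Require Import ring lra.
Import Order.TTheory GRing.Theory Num.Theory.
Import numFieldNormedType.Exports.
Local Open Scope classical_set_scope.
Local Open Scope ring_scope.
Section Vec.
Variable R : realType.
Variable d : nat.
Implicit Types u v w : 'rV[R]_d.

Definition dot u v : R := \sum_(j < d) u ord0 j * v ord0 j.

Lemma sqnorm_dot v : sqnorm v = dot v v.
Proof. by apply: eq_bigr => j _; rewrite expr2. Qed.

Lemma sqnorm_ge0 v : 0 <= sqnorm v.
Proof. by apply: sumr_ge0 => j _; rewrite sqr_ge0. Qed.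

Lemma dotC u v : dot u v = dot v u.
Proof. by apply: eq_bigr => j _; rewrite mulrC. Qed.

Lemma dotDl u v w : dot (u + v) w = dot u w + dot v w.
Proof. by rewrite /dot -big_split; apply: eq_bigr => j _; rewrite !mxE mulrDl. Qed.

Lemma dotZl a u v : dot (a *: u) v = a * dot u v.
Proof. by rewrite /dot mulr_sumr; apply: eq_bigr => j _; rewrite !mxE mulrA. Qed.

Lemma dotNl u v : dot (- u) v = - dot u v.
Proof. by rewrite -scaleN1r dotZl mulN1r. Qed.

Lemma dotBl u v w : dot (u - v) w = dot u w - dot v w.
Proof. by rewrite dotDl dotNl. Qed.

Lemma dotDr u v w : dot w (u + v) = dot w u + dot w v.
Proof. by rewrite dotC dotDl !(dotC w). Qed.

Lemma dotZr a u v : dot v (a *: u) = a * dot v u.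
Proof. by rewrite dotC dotZl dotC. Qed.

Lemma dotNr u v : dot u (- v) = - dot u v.
Proof. by rewrite dotC dotNl dotC. Qed.

Lemma sqnormD u v : sqnorm (u + v) = sqnorm u + 2 * dot u v + sqnorm v.
Proof. rewrite !sqnorm_dot dotDl !dotDr (dotC v u); ring. Qed.

Lemma sqnormZ a v : sqnorm (a *: v) = a ^+ 2 * sqnorm v.
Proof. by rewrite !sqnorm_dot dotZl dotZr mulrA expr2. Qed.

Lemma sqnormN v : sqnorm (- v) = sqnorm v.
Proof. by rewrite -scaleN1r sqnormZ sqrrN expr1n mul1r. Qed.

Lemma sqnormB u v : sqnorm (u - v) = sqnorm (v - u).
Proof. by rewrite -sqnormN opprB. Qed.

Lemma sqnorm_add_le u v : sqnorm (u + v) <= 2 * sqnorm u + 2 * sqnorm v.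
Proof.
have := sqnorm_ge0 (u - v); rewrite sqnormD dotNr sqnormN sqnormD; lra.
Qed.

Lemma sum_sq_le (I : finType) (P : pred I) (x : I -> R) :
  (\sum_(i | P i) x i) ^+ 2 <= #|P|%:R * \sum_(i | P i) x i ^+ 2.
Proof.
have H : 0 <= \sum_(i | P i) \sum_(k | P k) (x i - x k) ^+ 2.
  by apply: sumr_ge0 => i _; apply: sumr_ge0 => k _; apply: sqr_ge0.
have E : \sum_(i | P i) \sum_(k | P k) (x i - x k) ^+ 2 =
  2 * (#|P|%:R * \sum_(i | P i) x i ^+ 2 - (\sum_(i | P i) x i) ^+ 2).
  have E1 : forall i, \sum_(k | P k) (x i - x k) ^+ 2 =
     #|P|%:R * x i ^+ 2 - 2 * x i * \sum_(k | P k) x k + \sum_(k | P k) x k ^+ 2.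
    move=> i.
    under eq_bigr => k _ do rewrite sqrrB.
    rewrite !big_split /= sumrN sumr_const mulr_natl; congr (_ - _ + _).
    by rewrite mulr_sumr; apply: eq_bigr => k _; ring.
  under eq_bigr => i _ do rewrite E1.
  rewrite !big_split /= sumrN sumr_const -mulr_sumr -mulr_suml -mulr_sumr.
  rewrite mulr_natl; ring.
by move: H; rewrite E pmulr_rge0 // subr_ge0.
Qed.

Lemma sqnorm_sum_le (I : finType) (P : pred I) (w : I -> 'rV[R]_d) :
  sqnorm (\sum_(i | P i) w i) <= #|P|%:R * \sum_(i | P i) sqnorm (w i).
Proof.
rewrite /sqnorm (exchange_big _ _ _ _ _ ) /= mulr_sumr.
apply: ler_sum => c _; rewrite summxE; exact: sum_sq_le.
Qed.

Lemma cauchy_schwarz2 u v : dot u v ^+ 2 <= sqnorm u * sqnorm v.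
Proof.
set x := fun j : 'I_d => u ord0 j; set y := fun j : 'I_d => v ord0 j.
have H : 0 <= \sum_(i < d) \sum_(k < d) (x i * y k - x k * y i) ^+ 2.
  by apply: sumr_ge0 => i _; apply: sumr_ge0 => k _; apply: sqr_ge0.
have E : \sum_(i < d) \sum_(k < d) (x i * y k - x k * y i) ^+ 2 =
  2 * (sqnorm u * sqnorm v - dot u v ^+ 2).
  have E1 : forall i, \sum_(k < d) (x i * y k - x k * y i) ^+ 2 =
     x i ^+ 2 * sqnorm v - 2 * (x i * y i) * dot u v + y i ^+ 2 * sqnorm u.
    move=> i; rewrite /sqnorm /dot -/x -/y.
    under eq_bigr => k _ do rewrite sqrrB.
    rewrite !big_split /= sumrN !mulr_sumr; congr (_ - _ + _);
      by apply: eq_bigr => k _; rewrite /x /y; ring.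
  under eq_bigr => i _ do rewrite E1.
  rewrite !big_split /= sumrN -!mulr_suml -/x -/y.
  have -> : \sum_(i < d) x i ^+ 2 = sqnorm u by [].
  have -> : \sum_(i < d) y i ^+ 2 = sqnorm v by [].
  rewrite -mulr_sumr; have -> : \sum_(i < d) x i * y i = dot u v by []. ring.
by move: H; rewrite E pmulr_rge0 // subr_ge0.
Qed.

Lemma enorm_ge0 v : 0 <= enorm v.
Proof. exact: sqrtr_ge0. Qed.

Lemma enorm_sq v : enorm v ^+ 2 = sqnorm v.
Proof. by rewrite /enorm sqr_sqrtr // sqnorm_ge0. Qed.

Lemma cauchy_schwarz u v : dot u v <= enorm u * enorm v.
Proof.
apply: (le_trans (ler_norm _)).
rewrite -sqrtr_sqr /enorm -sqrtrM ?sqnorm_ge0 //.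
by rewrite ler_wsqrtr // cauchy_schwarz2.
Qed.

Lemma enormZ a v : enorm (a *: v) = `|a| * enorm v.
Proof. by rewrite /enorm sqnormZ sqrtrM ?sqr_ge0 // sqrtr_sqr. Qed.

Lemma Lsmooth_sq (L : R) (h : 'rV[R]_d -> R) x y : Lsmooth L h -> 0 <= L ->
  sqnorm (grad h x - grad h y) <= L ^+ 2 * sqnorm (x - y).
Proof.
move=> Hs L0; rewrite -!enorm_sq -exprMn.
by rewrite ler_pXn2r ?nnegrE ?enorm_ge0 ?mulr_ge0 ?enorm_ge0 //; apply: Hs.
Qed.


Lemma diff_dot (h : 'rV[R]_d -> R) p v : 'd h p v = dot (grad h p) v.
Proof.
rewrite {1}(matrix_sum_delta v) big_ord1 linear_sum /dot.
apply: eq_bigr => j _; rewrite linearZ /= mxE mulrC.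
by rewrite (_ : ord0 = 0) //; case: (0 : 'I_1) => [[]] //.
Qed.

Section Descent.
Variables (h : 'rV[R]_d -> R) (x v : 'rV[R]_d).
Hypothesis hd : forall y, differentiable h y.
Let g := fun t : R => h (t *: v + x).

Lemma g_eq t : (fun s : R => s^-1 *: ((g \o shift t) (s *: 1) - g t)) =
   (fun s : R => s^-1 *: ((h \o shift (t *: v + x)) (s *: v) - h (t *: v + x))).
Proof.
apply: funext => s; rewrite /g /= /shift /=.
by rewrite [s *: 1]mulr1 scalerDl addrA.
Qed.

Lemma g_derivable t : derivable g t 1.
Proof. rewrite /derivable g_eq; exact: diff_derivable. Qed.

Lemma g_derive t : 'D_1 g t = dot (grad h (t *: v + x)) v.
Proof. by rewrite /derive g_eq -/(derive h _ v) deriveE // diff_dot. Qed.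

Variable L : R.
Hypothesis hs : Lsmooth L h.
Hypothesis L0 : 0 <= L.

Lemma descent : h (v + x) <= h x + dot (grad h x) v + L / 2 * sqnorm v.
Proof.
pose c0 := dot (grad h x) v. pose K := L / 2 * sqnorm v.
pose phi := g - c0 \*: (@id R) - K \*: ((@id R) ^+ 2).
have Hg t : is_derive t (1:R) g ('D_1 g t) := derivableP (g_derivable t).
have D t : is_derive t (1:R) phi ('D_1 g t - c0 *: (1:R) - K *: ((2%:R * t ^+ 1) *: (1:R))).
  exact: is_deriveB.
have cont : {within `[0, 1], continuous phi}.
  apply: derivable_within_continuous => t _; exact: ex_derive.
have [c c01 E] := MVT ltr01 (fun t _ => D t) cont.
have c0' : 0 <= c by move: c01; rewrite in_itv /= => /andP[/ltW].
have B : dot (grad h (c *: v + x)) v - c0 <= L * c * sqnorm v.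
  rewrite /c0 -dotBl; apply: (le_trans (cauchy_schwarz _ _)).
  apply: (le_trans (ler_wpM2r (enorm_ge0 _) (hs _ _))).
  by rewrite addrK enormZ ger0_norm // -[sqnorm v]enorm_sq expr2 !mulrA.
move: E; rewrite /phi !fctE /= /g scale0r add0r scale1r subr0 mulr1 g_derive.
rewrite ![_%:A]mulr1 expr1 expr1n expr0n /= scaler0 subr0.
rewrite -[K%:A]/(K * 1) -[K *: 0]/(K * 0) -[K *: (2 * c)]/(K * (2 * c)) mulr1 mulr0 subr0.
move=> E; rewrite -/c0 -/K.
have HK : K * (2 * c) = L * c * sqnorm v by rewrite /K; field.
have E2 : h (v + x) - c0 - K - h x = dot (grad h (c *: v + x)) v - c0 - K * (2 * c) := E.
move: E2 B HK; generalize (h (v + x)) (h x) (dot (grad h (c *: v + x)) v) (L * c * sqnorm v) K c0 => a b e f k z. lra.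
Qed.


End Descent.

Lemma dot_suml (I : finType) (P : pred I) (w : I -> 'rV[R]_d) u :
  dot (\sum_(i | P i) w i) u = \sum_(i | P i) dot (w i) u.
Proof.
rewrite /dot exchange_big /=; apply: eq_bigr => j _.
by rewrite summxE mulr_suml.
Qed.

Lemma grad_bound1 (n : nat) (L : R) (H : 'I_n -> 'rV[R]_d -> R) x :
  (0 < n)%N -> 0 < L -> (forall p y, differentiable (H p) y) ->
  (forall p, Lsmooth L (H p)) ->
  has_lbound (range (fun y => n%:R^-1 * \sum_(p < n) H p y)) ->
  sqnorm (n%:R^-1 *: \sum_(p < n) grad (H p) x) <=
  2 * L * (n%:R^-1 * \sum_(p < n) H p x - inf (range (fun y => n%:R^-1 * \sum_(p < n) H p y))).
Proof.
move=> n0 L0 Hd Hs Hlb.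
set a := n%:R^-1 *: \sum_(p < n) grad (H p) x.
set v := (- L^-1) *: a.
have D p := @descent (H p) x v (Hd p) L (Hs p).
have Havg : n%:R^-1 * \sum_(p < n) H p (v + x) <=
   n%:R^-1 * \sum_(p < n) H p x + dot a v + L / 2 * sqnorm v.
  rewrite /a dotZl dot_suml -mulrDr. 
  have -> : L / 2 * sqnorm v = n%:R^-1 * \sum_(p < n) (L / 2 * sqnorm v).
    rewrite sumr_const card_ord -[_ *+ n]mulr_natr; field; by rewrite pnatr_eq0 -lt0n.
  rewrite -mulrDr ler_wpM2l ?invr_ge0 ?ler0n // -!big_split /=.
  by apply: ler_sum => p _; apply: D.
have Hinf : inf (range (fun y => n%:R^-1 * \sum_(p < n) H p y)) <=
   n%:R^-1 * \sum_(p < n) H p (v + x).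
  by apply: ge_inf => //; exists (v + x).
move: Havg Hinf; rewrite /v dotZr sqnormZ sqrrN -sqnorm_dot.
have Ha := sqnorm_ge0 a.
set s := sqnorm a; set A := n%:R^-1 * _; set B := n%:R^-1 * _; set I := inf _.
move=> H1 H2.
have E : - L^-1 * s + L / 2 * (L^-1 ^+ 2 * s) = - (s / (2 * L)).
  by field; rewrite gt_eqF.
rewrite -addrA E in H1.
have : s / (2 * L) <= B - I by lra.
rewrite ler_pdivrMr ?mulr_gt0 // mulrC; lra.
Qed.

End Vec.
Section Comb.
Variables (R : realType) (n : nat) (W : finType) (sg : W -> {perm 'I_n}).
Hypothesis Hinv : forall (t : {perm 'I_n}) (h : {perm 'I_n} -> R),
  \sum_w h (sg w) = \sum_w h ((t * sg w)%g).
Let N : R := #|W|%:R.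

Lemma symL1 (c : 'I_n -> R) j k : \sum_w c (sg w j) = \sum_w c (sg w k).
Proof.
rewrite (Hinv (tperm j k) (fun s => c (s j))).
by apply: eq_bigr => w _; rewrite permM tpermL.
Qed.

Lemma symL1' (c : 'I_n -> R) j : n%:R * \sum_w c (sg w j) = N * \sum_p c p.
Proof.
have E : \sum_(k < n) \sum_w c (sg w k) = n%:R * \sum_w c (sg w j).
  rewrite (eq_bigr (fun _ => \sum_w c (sg w j))) => [|k _]; last exact: symL1.
  by rewrite sumr_const card_ord mulr_natl.
rewrite -E exchange_big /=.
rewrite (eq_bigr (fun _ => \sum_p c p)) => [|w _].
  by rewrite sumr_const mulr_natl.
by rewrite [RHS](reindex_inj (@perm_inj _ (sg w))).
Qed.

Lemma symL2 (b : 'I_n -> R) j k k' : j != k -> j != k' ->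
  \sum_w b (sg w j) * b (sg w k) = \sum_w b (sg w j) * b (sg w k').
Proof.
move=> jk jk'.
rewrite (Hinv (tperm k k') (fun s => b (s j) * b (s k))).
apply: eq_bigr => w _; rewrite !permM tpermL tpermD //; by rewrite eq_sym.
Qed.

Variable b : 'I_n -> R.
Let B := \sum_p b p.
Let Q := \sum_p b p ^+ 2.
Let T j k := \sum_w b (sg w j) * b (sg w k).

Lemma nm1 (j : 'I_n) : (n.-1)%:R = n%:R - 1 :> R.
Proof. by rewrite -subn1 natrB //; case: n j => [[]|]. Qed.

Lemma symL2' j k : j != k -> (n%:R - 1) * (n%:R * T j k) = N * (B ^+ 2 - Q).
Proof.
move=> jk.
have E1 : (n%:R - 1) * T j k = \sum_(k' | k' != j) T j k'.
  rewrite (eq_bigr (fun _ => T j k)) => [|k' k'j]; last first.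
    by rewrite /T (@symL2 b j k k') // eq_sym.
  rewrite sumr_const -nm1 // mulr_natl; congr (_ *+ _).
  by rewrite cardC1 card_ord.
have E2 : \sum_(k' | k' != j) T j k' = B * \sum_w b (sg w j) - \sum_w b (sg w j) ^+ 2.
  rewrite /T exchange_big /= mulr_sumr -sumrB; apply: eq_bigr => w _.
  rewrite -mulr_sumr expr2 [B * _]mulrC -mulrBr; congr (_ * _).
  have : B = \sum_k' b (sg w k') by rewrite /B (reindex_inj (@perm_inj _ (sg w))).
  by rewrite (bigD1 j) //= => ->; rewrite addrC addrK.
rewrite mulrCA E1 E2 mulrBr mulrCA symL1' -/B.
rewrite (symL1' (fun p => b p ^+ 2)) -/Q; ring.
Qed.

Lemma sum_cst_pred (P : pred 'I_n) (X : R) :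
  \sum_(k | P k) X = X * \sum_(k | P k) 1.
Proof. by rewrite mulr_sumr; apply: eq_bigr => k _; rewrite mulr1. Qed.

Lemma card_predD1 (P : pred 'I_n) j : P j ->
  \sum_(k | P k && (k != j)) (1 : R) = #|P|%:R - 1.
Proof.
move=> Pj; have : \sum_(k | P k) (1 : R) = #|P|%:R by rewrite sumr_const.
by rewrite (bigD1 j) //= => <-; rewrite addrC addrK.
Qed.

Lemma sym_main (P : pred 'I_n) :
  n%:R * (n%:R - 1) * \sum_w (\sum_(j | P j) b (sg w j)) ^+ 2 =
  N * #|P|%:R * ((n%:R - #|P|%:R) * Q + (#|P|%:R - 1) * B ^+ 2).
Proof.
have E : \sum_w (\sum_(j | P j) b (sg w j)) ^+ 2 = \sum_(j | P j) \sum_(k | P k) T j k.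
  rewrite /T; under eq_bigr => w _ do rewrite expr2 big_distrl /=.
  rewrite exchange_big /=; apply: eq_bigr => j _.
  under eq_bigr => w _ do rewrite big_distrr /=.
  by rewrite exchange_big.
rewrite E mulr_sumr.
rewrite (eq_bigr (fun _ => N * ((n%:R - 1) * Q + (#|P|%:R - 1) * (B ^+ 2 - Q)))) => [|j Pj].
  rewrite sum_cst_pred sumr_const; ring.
rewrite (bigD1 j) //=.
have H1 : n%:R * T j j = N * Q.
  rewrite /T /Q -(symL1' (fun p => b p ^+ 2) j); congr (_ * _).
have H2 : (n%:R - 1) * (n%:R * \sum_(k | P k && (k != j)) T j k) =
    (#|P|%:R - 1) * (N * (B ^+ 2 - Q)).
  rewrite mulr_sumr mulr_sumr (eq_bigr (fun _ => N * (B ^+ 2 - Q))) => [|k /andP[_ kj]].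
    by rewrite sum_cst_pred card_predD1 // mulrC.
  by rewrite symL2' // eq_sym.
have -> : n%:R * (n%:R - 1) * (T j j + \sum_(k | P k && (k != j)) T j k) =
  (n%:R - 1) * (n%:R * T j j) + (n%:R - 1) * (n%:R * \sum_(k | P k && (k != j)) T j k) by ring.
rewrite H1 H2; ring.
Qed.

End Comb.
Lemma sym_vec (R : realType) d n (W : finType) (sg : W -> {perm 'I_n})
  (Hinv : forall (t : {perm 'I_n}) (h : {perm 'I_n} -> R),
     \sum_w h (sg w) = \sum_w h ((t * sg w)%g))
  (a : 'I_n -> 'rV[R]_d) (P : pred 'I_n) :
  n%:R * (n%:R - 1) * \sum_w sqnorm (\sum_(j | P j) a (sg w j)) =
  #|W|%:R * #|P|%:R * ((n%:R - #|P|%:R) * \sum_p sqnorm (a p) +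
     (#|P|%:R - 1) * sqnorm (\sum_p a p)).
Proof.
rewrite /sqnorm [in LHS]exchange_big [in X in _ * X + _]exchange_big /=.
rewrite mulr_sumr mulr_sumr mulr_sumr -big_split /= mulr_sumr.
apply: eq_bigr => c _.
have := @sym_main R n W sg Hinv (fun p => a p ord0 c) P.
under eq_bigr => w _ do rewrite summxE.
rewrite summxE.
by move=> ->.
Qed.

Lemma ffun_inv (R : realType) M n (m : 'I_M) (t : {perm 'I_n})
  (h : {perm 'I_n} -> R) :
  \sum_(P : {ffun 'I_M -> {perm 'I_n}}) h (P m) =
  \sum_(P : {ffun 'I_M -> {perm 'I_n}}) h ((t * P m)%g).
Proof.
pose phi (P : {ffun 'I_M -> {perm 'I_n}}) : {ffun 'I_M -> {perm 'I_n}} :=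
  [ffun m' => if m' == m then (t * P m')%g else P m'].
have inj : injective phi.
  move=> P1 P2 E; apply/ffunP => m'.
  have := congr1 (fun P : {ffun _ -> _} => P m') E; rewrite /phi /= !ffunE.
  by case: (m' == m) => // /mulgI.
rewrite (reindex_inj inj); apply: eq_bigr => P _.
by rewrite /phi ffunE eqxx.
Qed.
Lemma card_lt n i : (i <= n)%N -> #|[pred j : 'I_n | (j < i)%N]| = i.
Proof.
move=> le; rewrite -sum1_card.
have -> : \sum_(j in [pred j : 'I_n | (j < i)%N]) 1%N = \sum_(j < n | (j < i)%N) 1%N by [].
by rewrite (big_ord_narrow le) sum1_card card_ord.
Qed.

Lemma sum_id (R : realType) n : \sum_(i < n) (i%:R : R) = n%:R * (n%:R - 1) / 2.
Proof.
elim: n => [|n IH]; first by rewrite big_ord0 mul0r mul0r.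
by rewrite big_ord_recr /= IH -addn1 natrD; field.
Qed.

Lemma sum_sq (R : realType) n : \sum_(i < n) (i%:R ^+ 2 : R) = n%:R * (n%:R - 1) * (2 * n%:R - 1) / 6.
Proof.
elim: n => [|n IH]; first by rewrite big_ord0 !mul0r.
by rewrite big_ord_recr /= IH -addn1 natrD; field.
Qed.

Section Iter.
Variables (R : realType) (d n : nat) (gamma : R) (h : 'I_n -> 'rV[R]_d -> R)
  (pi : {perm 'I_n}) (xt : 'rV[R]_d).
Let x k := rr_iter gamma h pi xt k.

Lemma rr_step k (kn : (k < n)%N) : x k.+1 = x k - gamma *: grad (h (pi (Ordinal kn))) (x k).
Proof.
rewrite /x [rr_iter _ _ _ _ k.+1]/=.
rewrite insubT.
done.
Qed.
Lemma rr_sum k : (k <= n)%N ->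
  x k = xt - gamma *: \sum_(j < n | (j < k)%N) grad (h (pi j)) (x j).
Proof.
elim: k => [_|k IH kn].
  by rewrite big_pred0 // scaler0 subr0.
rewrite (@rr_step k kn).
have IH2 := IH (ltnW kn).
rewrite {1}IH2.
rewrite [in RHS](bigD1 (Ordinal kn)) //= scalerDr opprD addrA addrAC.
have -> : \sum_(i < n | (i < k.+1)%N && (i != Ordinal kn)) grad (h (pi i)) (x i) =
  \sum_(j < n | (j < k)%N) grad (h (pi j)) (x j).
  apply: eq_bigl => j; rewrite ltnS ltn_neqAle andbC; congr (_ && _).
done.
Qed.
Variable L : R.
Hypothesis hs : forall p, Lsmooth L (h p).
Hypothesis L0 : 0 <= L.
Let D k := sqnorm (xt - x k).
Let A (i : nat) := sqnorm (\sum_(j < n | (j < i)%N) grad (h (pi j)) xt).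

Lemma rr_bound i : (i <= n)%N ->
  D i <= 2 * gamma ^+ 2 * L ^+ 2 * i%:R * \sum_(j < n | (j < i)%N) D j + 2 * gamma ^+ 2 * A i.
Proof.
move=> le.
rewrite /D rr_sum // opprB addrC subrK sqnormZ.
set U := \sum_(j < n | (j < i)%N) (grad (h (pi j)) (x j) - grad (h (pi j)) xt).
have -> : \sum_(j < n | (j < i)%N) grad (h (pi j)) (x j) =
   U + \sum_(j < n | (j < i)%N) grad (h (pi j)) xt.
  by rewrite /U -big_split /=; apply: eq_bigr => j _; rewrite subrK.
have HU : sqnorm U <= L ^+ 2 * i%:R * \sum_(j < n | (j < i)%N) D j.
  apply: le_trans; first exact: sqnorm_sum_le.
  rewrite card_lt // [L ^+ 2 * _]mulrC -mulrA ler_wpM2l ?ler0n //.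
  rewrite mulr_sumr; apply: ler_sum => j _.
  rewrite /D sqnormB; exact: Lsmooth_sq.
have := @sqnorm_add_le R d U (\sum_(j < n | (j < i)%N) grad (h (pi j)) xt).
rewrite -/(A i) => H.
have g2 : 0 <= gamma ^+ 2 by apply: sqr_ge0.
have := ler_wpM2l g2 H.
move: HU; set S := \sum_(j < n | (j < i)%N) D j; set K := L ^+ 2 * i%:R * S => HU H2.
apply: (le_trans H2).
have -> : 2 * gamma ^+ 2 * L ^+ 2 * i%:R * S = 2 * gamma ^+ 2 * K by rewrite /K; ring.
have E1 : gamma ^+ 2 * (2 * sqnorm U + 2 * A i) = 2 * (gamma ^+ 2 * sqnorm U) + 2 * gamma ^+ 2 * A i by ring.
have E2 : 2 * gamma ^+ 2 * K = 2 * (gamma ^+ 2 * K) by ring.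
rewrite E1 E2 lerD2r ler_wpM2l //; exact: ler_wpM2l.
Qed.

Hypothesis gam0 : 0 <= gamma.
Hypothesis gamL : gamma ^+ 2 * L ^+ 2 * n%:R ^+ 2 <= 1 / 4.

Lemma sum_bound : \sum_(i < n) D i <= 8 / 3 * gamma ^+ 2 * \sum_(i < n) A i.
Proof.
set SD := \sum_(i < n) D i.
have SD0 : 0 <= SD by apply: sumr_ge0 => i _; apply: sqnorm_ge0.
have H1 : SD <= \sum_(i < n) (2 * gamma ^+ 2 * L ^+ 2 * i%:R * SD + 2 * gamma ^+ 2 * A i).
  rewrite {1}/SD; apply: ler_sum => i _; apply: (le_trans (@rr_bound i (ltnW (ltn_ord i)))).
  rewrite lerD2r ler_wpM2l //.
    by rewrite !mulr_ge0 ?ler0n ?sqr_ge0.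
  rewrite /SD [X in _ <= X](bigID (fun j : 'I_n => (j < i)%N)) /= lerDl.
  by apply: sumr_ge0 => j _; apply: sqnorm_ge0.
have E1 : \sum_(i < n) (2 * gamma ^+ 2 * L ^+ 2 * i%:R * SD) =
    2 * gamma ^+ 2 * L ^+ 2 * (n%:R * (n%:R - 1) / 2) * SD.
  by rewrite -mulr_suml -mulr_sumr sum_id.
have E2 : \sum_(i < n) (2 * gamma ^+ 2 * A i) = 2 * gamma ^+ 2 * \sum_(i < n) A i.
  by rewrite mulr_sumr.
rewrite big_split /= E1 E2 in H1.
have G : 2 * gamma ^+ 2 * L ^+ 2 * (n%:R * (n%:R - 1) / 2) <= 1 / 4.
  apply: le_trans gamL; rewrite -subr_ge0.
  have -> : gamma ^+ 2 * L ^+ 2 * n%:R ^+ 2 - 2 * gamma ^+ 2 * L ^+ 2 * (n%:R * (n%:R - 1) / 2)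
     = (gamma * L) ^+ 2 * n%:R by field.
  by rewrite mulr_ge0 ?sqr_ge0.
have cS := ler_wpM2r SD0 G.
have H3 := le_trans H1 (lerD cS (lexx _)).
move: H3.
rewrite -[2 * gamma ^+ 2 * \sum_(i < n) A i]mulrA -[8 / 3 * gamma ^+ 2 * \sum_(i < n) A i]mulrA.
generalize (gamma ^+ 2 * \sum_(i < n) A i) => p; lra.
Qed.

End Iter.

Lemma grad_single (R : realType) d (L : R) (h : 'rV[R]_d -> R) x :
  0 < L -> (forall y, differentiable h y) -> Lsmooth L h -> has_lbound (range h) ->
  sqnorm (grad h x) <= 2 * L * (h x - finf h).
Proof.
move=> L0 hd hs hlb.
have := @grad_bound1 R d 1 L (fun _ => h) x isT L0 (fun _ => hd) (fun _ => hs).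
have E : (fun y => 1^-1 * \sum_(p < 1) h y) = h.
  by apply: funext => y; rewrite big_ord1 invr1 mul1r.
rewrite E big_ord1 invr1 scale1r mul1r big_ord1 => H; exact: H.
Qed.

Lemma sum_quad (R : realType) n (c1 c2 : R) :
  \sum_(i < n) (c1 * i%:R + c2 * i%:R ^+ 2) =
  c1 * (n%:R * (n%:R - 1) / 2) + c2 * (n%:R * (n%:R - 1) * (2 * n%:R - 1) / 6).
Proof. by rewrite big_split /= -!mulr_sumr sum_id sum_sq. Qed.

Lemma sqnorm0 (R : realType) d : sqnorm (0 : 'rV[R]_d) = 0.
Proof. by rewrite /sqnorm big1 // => j _; rewrite mxE expr0n. Qed.

Section PerM.
Variables (R : realType) (M n d : nat) (m : 'I_M) (L gamma : R)
  (h : 'I_n -> 'rV[R]_d -> R) (xt : 'rV[R]_d).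
Hypothesis hs : forall p, Lsmooth L (h p).
Hypothesis L0 : 0 <= L.
Hypothesis gam0 : 0 <= gamma.
Hypothesis gamL : gamma ^+ 2 * L ^+ 2 * n%:R ^+ 2 <= 1 / 4.
Hypothesis n0 : (0 < n)%N.
Let N : R := #|{ffun 'I_M -> {perm 'I_n}}|%:R.
Let a p := grad (h p) xt.
Let T1 := sqnorm (\sum_p a p).
Let T2 := \sum_p sqnorm (a p).

Lemma N_gt0 : 0 < N.
Proof.
rewrite /N ltr0n; apply/card_gt0P; by exists [ffun => 1%g].
Qed.

Lemma Xbound : \sum_(i < n) \sum_(P : {ffun 'I_M -> {perm 'I_n}})
      sqnorm (xt - rr_iter gamma h (P m) xt i) <=
   8 / 3 * gamma ^+ 2 * \sum_(i < n) \sum_(P : {ffun 'I_M -> {perm 'I_n}})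
      sqnorm (\sum_(j < n | (j < i)%N) grad (h (P m j)) xt).
Proof.
rewrite exchange_big [X in _ <= _ * X]exchange_big /= mulr_sumr.
apply: ler_sum => P _.
exact: (@sum_bound R d n gamma h (P m) xt L hs L0 gam0 gamL).
Qed.

Lemma Aident (i : 'I_n) : n%:R * (n%:R - 1) *
   \sum_(P : {ffun 'I_M -> {perm 'I_n}}) sqnorm (\sum_(j < n | (j < i)%N) grad (h (P m j)) xt)
   = N * i%:R * ((n%:R - i%:R) * T2 + (i%:R - 1) * T1).
Proof.
have := @sym_vec R d n _ (fun P : {ffun 'I_M -> {perm 'I_n}} => P m) (@ffun_inv R M n m) a
   [pred j : 'I_n | (j < i)%N].
by rewrite card_lt // ltnW.
Qed.

Lemma Ybound : \sum_(i < n) \sum_(P : {ffun 'I_M -> {perm 'I_n}})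
      sqnorm (\sum_(j < n | (j < i)%N) grad (h (P m j)) xt) <=
   3 / 8 * n%:R * N * (T1 + T2).
Proof.
have T1g : 0 <= T1 by apply: sqnorm_ge0.
have T2g : 0 <= T2 by apply: sumr_ge0 => p _; apply: sqnorm_ge0.
have Ng := N_gt0.
have nR : 1 <= n%:R :> R by rewrite ler1n.
case: (ltnP 1 n) => n2; last first.
  rewrite big1 ?mulr_ge0 ?addr_ge0 ?mulr_ge0 ?ler0n ?(ltW Ng) // => i _.
  rewrite big1 // => P _.
  rewrite big_pred0 ?sqnorm0 // => j.
  have : (i < 1)%N by apply: leq_trans (ltn_ord i) n2.
  by rewrite ltnS leqn0 => /eqP ->; rewrite ltn0.
have nn0 : n%:R * (n%:R - 1) != 0 :> R.
  by rewrite mulf_neq0 // ?pnatr_eq0 -?lt0n // subr_eq0 pnatr_eq1 neq_ltn n2 orbT.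
apply: (@le_trans _ _ (N * (T2 * (n%:R + 1) / 6 + T1 * (n%:R - 2) / 3))).
  rewrite le_eqVlt; apply/orP; left; apply/eqP.
  apply: (mulfI nn0); rewrite mulr_sumr.
  rewrite (eq_bigr (fun i : 'I_n => N * (n%:R * T2 - T1) * i%:R + N * (T1 - T2) * i%:R ^+ 2)).
    by rewrite sum_quad; field.
  by move=> i _; rewrite Aident; ring.
rewrite -subr_ge0.
have -> : 3 / 8 * n%:R * N * (T1 + T2) - N * (T2 * (n%:R + 1) / 6 + T1 * (n%:R - 2) / 3)
   = N * (T2 * (5 * n%:R - 4) + T1 * (n%:R + 16)) / 24 by field.
apply: divr_ge0 => //; apply: mulr_ge0; first exact: ltW.
apply: addr_ge0; apply: mulr_ge0 => //; lra.
Qed.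

Lemma perm_bound : (n%:R * N)^-1 * \sum_(i < n) \sum_(P : {ffun 'I_M -> {perm 'I_n}})
      sqnorm (xt - rr_iter gamma h (P m) xt i) <= gamma ^+ 2 * (T1 + T2).
Proof.
have Ng := N_gt0.
have nN : 0 < n%:R * N by rewrite mulr_gt0 // ltr0n.
rewrite ler_pdivrMl //.
apply: (le_trans Xbound).
apply: (le_trans (ler_wpM2l _ Ybound)); first by rewrite mulr_ge0 ?sqr_ge0.
by rewrite le_eqVlt; apply/orP; left; apply/eqP; field.
Qed.

End PerM.

Lemma gamL_of (R : realType) (n : nat) (L gamma : R) : 0 < L -> (0 < n)%N -> 0 <= gamma ->
  gamma <= (2 * L * n%:R)^-1 -> gamma ^+ 2 * L ^+ 2 * n%:R ^+ 2 <= 1 / 4.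
Proof.
move=> L0 n0 g0 gle.
have p : 0 < 2 * L * n%:R by rewrite !mulr_gt0 // ltr0n.
have h1 : gamma * (2 * L * n%:R) <= 1.
  by rewrite -ler_pdivlMr // mul1r.
have h0 : 0 <= gamma * (2 * L * n%:R) by rewrite mulr_ge0 // ltW.
have h2 : (gamma * (2 * L * n%:R)) ^+ 2 <= 1.
  by rewrite expr2 mulr_ile1.
have -> : gamma ^+ 2 * L ^+ 2 * n%:R ^+ 2 = (gamma * (2 * L * n%:R)) ^+ 2 / 4.
  by field.
by rewrite ler_pdivrMr // mul1r; apply: (le_trans h2); lra.
Qed.

Theorem mainTheorem8 (R : realType) (M n d : nat) (L gamma : R)
    (F : 'I_M -> 'I_n -> 'rV[R]_d -> R) (xt : 'rV[R]_d) :
  (0 < M)%N -> (0 < n)%N -> 0 < L ->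
  (forall m i x, differentiable (F m i) x) ->
  (forall m i, Lsmooth L (F m i)) ->
  has_lbound (range (fall F)) ->
  (forall m, has_lbound (range (fm F m))) ->
  (forall m i, has_lbound (range (F m i))) ->
  0 <= gamma -> gamma <= (2 * L * n%:R)^-1 ->
  (M * n)%:R^-1 *
    \sum_(m < M) \sum_(i < n)
      (#|{ffun 'I_M -> {perm 'I_n}}|%:R^-1 *
        \sum_(P : {ffun 'I_M -> {perm 'I_n}})
          sqnorm (xt - rr_iter gamma (F m) (P m) xt i))
  <= 4 * gamma ^+ 2 * n%:R ^+ 2 * L * (fall F xt - finf (fall F))
     + 2 * gamma ^+ 2 * n%:R ^+ 2 * L * Delta_star F
     + 2 * gamma ^+ 2 * n%:R * L * (M%:R^-1 * \sum_(m < M) Delta_star_m F m).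
Proof.
move=> M0 n0 L0 Hd Hs Hlb Hlbm Hlbi g0 gle.
have gamL := @gamL_of R n L gamma L0 n0 g0 gle.
set N : R := #|{ffun 'I_M -> {perm 'I_n}}|%:R.
have NR : 0 < N by exact: (@N_gt0 R M n).
have nR : 0 < n%:R :> R by rewrite ltr0n.
have MR : 0 < M%:R :> R by rewrite ltr0n.
set fs := finf (fall F).
pose al m := fm F m xt.
pose be m := finf (fm F m).
pose de m := n%:R^-1 * \sum_(p < n) finf (F m p).
have Bm : forall m : 'I_M, (n%:R * N)^-1 * \sum_(i < n) \sum_(P : {ffun 'I_M -> {perm 'I_n}})
      sqnorm (xt - rr_iter gamma (F m) (P m) xt i) <=
    2 * L * gamma ^+ 2 * n%:R ^+ 2 * (al m - be m) + 2 * L * gamma ^+ 2 * n%:R * (al m - de m).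
  move=> m.
  apply: (le_trans (@perm_bound R M n d m L gamma (F m) xt (Hs m) (ltW L0) g0 gamL n0)).
  set a := fun p => grad (F m p) xt.
  have T1b : sqnorm (\sum_p a p) <= n%:R ^+ 2 * (2 * L * (al m - be m)).
    have -> : \sum_p a p = n%:R *: (n%:R^-1 *: \sum_p a p).
      by rewrite scalerA mulfV ?scale1r // gt_eqF.
    rewrite sqnormZ ler_wpM2l ?sqr_ge0 //.
    exact: (@grad_bound1 R d n L (F m) xt n0 L0 (Hd m) (Hs m) (Hlbm m)).
  have T2b : \sum_p sqnorm (a p) <= n%:R * (2 * L * (al m - de m)).
    apply: (@le_trans _ _ (\sum_(p < n) (2 * L * (F m p xt - finf (F m p))))).
      apply: ler_sum => p _; exact: grad_single.
    rewrite -mulr_sumr sumrB /al /de /fm mulrCA; apply: ler_wpM2l; first by rewrite mulr_ge0 // ltW.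
    by rewrite mulrBr !mulrA mulfV ?gt_eqF // !mul1r.
  have := ler_wpM2l (sqr_ge0 gamma) (lerD T1b T2b).
  move=> H; apply: (le_trans H); rewrite le_eqVlt; apply/orP; left; apply/eqP; ring.
have LHS_eq : (M * n)%:R^-1 * \sum_(m < M) \sum_(i < n) (N^-1 *
        \sum_(P : {ffun 'I_M -> {perm 'I_n}}) sqnorm (xt - rr_iter gamma (F m) (P m) xt i)) =
    M%:R^-1 * \sum_(m < M) ((n%:R * N)^-1 * \sum_(i < n) \sum_(P : {ffun 'I_M -> {perm 'I_n}})
      sqnorm (xt - rr_iter gamma (F m) (P m) xt i)).
  rewrite natrM !mulr_sumr; apply: eq_bigr => m _; rewrite -mulr_sumr.
  by field; rewrite !gt_eqF.
rewrite LHS_eq.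
have Mi : 0 <= M%:R^-1 :> R by rewrite invr_ge0 ltW.
apply: le_trans; first (apply: (ler_wpM2l Mi); apply: ler_sum => m _; exact: Bm).
set c1 := 2 * L * gamma ^+ 2 * n%:R ^+ 2.
set c2 := 2 * L * gamma ^+ 2 * n%:R.
have S : \sum_(m < M) (c1 * (al m - be m) + c2 * (al m - de m)) =
    c1 * (\sum_m al m - \sum_m be m) + c2 * (\sum_m al m - \sum_m de m).
  rewrite !mulrBr !mulr_sumr -!sumrB -big_split /=; apply: eq_bigr => m _; ring.
rewrite S.
have Ef : fall F xt = M%:R^-1 * \sum_m al m by [].
have Ed : Delta_star F = fs - M%:R^-1 * \sum_m be m by [].
have Edm : M%:R^-1 * \sum_(m < M) Delta_star_m F m = fs - M%:R^-1 * \sum_m de m.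
  rewrite /Delta_star_m sumrB sumr_const card_ord -/fs -/(de _).
  rewrite mulrBr -[fs *+ M]mulr_natr mulrCA mulVf ?gt_eqF // mulr1.
  by congr (_ - _ * _); apply: eq_bigr.
rewrite Ef Ed Edm.
have fsle : fs <= M%:R^-1 * \sum_m al m.
  by rewrite -Ef; apply: ge_inf => //; exists xt.
move: fsle; rewrite /c1 /c2.
set A := M%:R^-1 * \sum_m al m; set B := M%:R^-1 * \sum_m be m; set D := M%:R^-1 * \sum_m de m.
have -> : M%:R^-1 * (2 * L * gamma ^+ 2 * n%:R ^+ 2 * (\sum_m al m - \sum_m be m) +
      2 * L * gamma ^+ 2 * n%:R * (\sum_m al m - \sum_m de m)) =
   2 * L * gamma ^+ 2 * n%:R ^+ 2 * (A - B) + 2 * L * gamma ^+ 2 * n%:R * (A - D).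
  by rewrite /A /B /D; ring.
move=> fsle; rewrite -subr_ge0.
have -> : 4 * gamma ^+ 2 * n%:R ^+ 2 * L * (A - fs) + 2 * gamma ^+ 2 * n%:R ^+ 2 * L * (fs - B) +
    2 * gamma ^+ 2 * n%:R * L * (fs - D) -
    (2 * L * gamma ^+ 2 * n%:R ^+ 2 * (A - B) + 2 * L * gamma ^+ 2 * n%:R * (A - D)) =
    2 * L * gamma ^+ 2 * n%:R * (n%:R - 1) * (A - fs) by ring.
rewrite !mulr_ge0 ?sqr_ge0 ?ler0n ?(ltW L0) // ?subr_ge0 //.
by rewrite ler1n.
Qed.
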